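(* For any preorder $B$ on $\mathcal{SC}$ and all $\sigma_1,\sigma_2\in\mathcal{SC}$: $\sigma_1\preceq_B\sigma_2$ if and only if $\sigma_1\sqsubseteq_B\sigma_2$.
   Context: Fix base types $BT$ with preorder $\leq_{\mathsf b}$ and labels $\mathcal L$. Contract terms: $\sigma::=\mathbf 1\mid ?\mathtt t.\sigma\mid !\mathtt t.\sigma\mid !(\sigma).\sigma\mid ?(\sigma).\sigma\mid \sum_{i\in I}?l_i.\sigma_i\mid \bigoplus_{i\in I}!l_i.\sigma_i\mid \mu x.\sigma\mid x$ ($I$ finite nonempty, labels distinct). $\mathcal{SC}$ = closed guarded terms. $\mathrm{unfold}(\mu x.\sigma')=\mathrm{unfold}(\sigma'[\mu x.\sigma'/x])$, otherwise identity. LTS: $\mathbf 1\xrightarrow\checkmark$; $\lambda.\sigma\xrightarrow\lambda\sigma$ for prefixes (including $!l.\sigma$); $\bigoplus_{i\in I}!l_i.\sigma_i\xrightarrow\tau!l_i.\sigma_i$ for $|I|>1$; $\sum ?l_i.\sigma_i\xrightarrow{?l_i}\sigma_i$; $\mu x.\sigma\xrightarrow\tau\sigma[\mu x.\sigma/x]$. $\lambda_1\bowtie_B\lambda_2$ iff the pair is $(!l,?l)$, $(?l,!l)$, $(!\mathtt t_1,?\mathtt t_2)$ with $\mathtt t_1\leq_{\mathsf b}\mathtt t_2$, $(?\mathtt t_1,!\mathtt t_2)$ with $\mathtt t_2\leq_{\mathsf b}\mathtt t_1$, $(!(\sigma_1),?(\sigma_2))$ with $\sigma_1B\sigma_2$,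 $(?(\sigma_1),!(\sigma_2))$ with $\sigma_2B\sigma_1$. $\rho\|\sigma\xrightarrow\tau_B$ by a $\tau$ of either side or by synchronisation on $\lambda_1\bowtie_B\lambda_2$. $\dashv_B$: greatest $R$ with $\rho R\sigma$ implying (i) if $\rho\|\sigma$ has no $\xrightarrow\tau_B$ move then $\rho\xrightarrow\checkmark$, $\sigma\xrightarrow\checkmark$; (ii) every $\rho\|\sigma\xrightarrow\tau_B\rho'\|\sigma'$ has $\rho'R\sigma'$. $\sigma_1\sqsubseteq_B\sigma_2$ iff $\forall\rho\in\mathcal{SC}$, $\rho\dashv_B\sigma_1\Rightarrow\rho\dashv_B\sigma_2$. $\mathcal S(R,B)$: pairs $(\sigma_1,\sigma_2)$ such that, by the shape of $\mathrm{unfold}(\sigma_1)$: $\mathbf 1$ forces $\mathrm{unfold}(\sigma_2)=\mathbf 1$; $?\mathtt t_1.\sigma_1'$ forces $?\mathtt t_2.\sigma_2'$ with $\sigma_1'R\sigma_2'$, $\mathtt t_1\leq_{\mathsf b}\mathtt t_2$; $!\mathtt t_1.\sigma_1'$ forces $!\mathtt t_2.\sigma_2'$ with $\sigma_1'R\sigma_2'$, $\mathtt t_2\leq_{\mathsf b}\mathtt t_1$; $!(\sigma^m_1).\sigma_1'$ forces $!(\sigma^m_2).\sigma_2'$ with $\sigma_1'R\sigma_2'$, $\sigma^m_2B\sigma^m_1$; $?(\sigma^m_1).\sigma_1'$ forces $?(\sigma^m_2).\sigma_2'$ with $\sigma_1'R\sigma_2'$, $\sigma^m_1B\sigma^m_2$;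 $\sum_{i\in I}?l_i.\sigma^1_i$ forces $\sum_{j\in J}?l_j.\sigma^2_j$ with $I\subseteq J$, $\sigma^1_iR\sigma^2_i$; $\bigoplus_{i\in I}!l_i.\sigma^1_i$ forces $\bigoplus_{j\in J}!l_j.\sigma^2_j$ with $J\subseteq I$, $\sigma^1_jR\sigma^2_j$ (where the forced form is that of $\mathrm{unfold}(\sigma_2)$). $\preceq_B$ is the greatest $R$ with $R\subseteq\mathcal S(R,B)$. *)

(* Defs.v *)
From Stdlib Require Import List Arith RelationClasses.
Import ListNotations.

Set Implicit Arguments.

Section Contracts.

Variables (BT L : Type) (leb : BT -> BT -> Prop).

(* Contract terms; recursion variables are natural numbers.
   Sum = external choice of ?l_i.s_i, Choice = internal choice of !l_i.s_i. *)
Inductive term : Type :=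
| One : term
| InT : BT -> term -> term
| OutT : BT -> term -> term
| OutM : term -> term -> term
| InM : term -> term -> term
| Sum : list (L * term) -> term
| Choice : list (L * term) -> term
| Mu : nat -> term -> term
| Var : nat -> term.

(* substitution s[r/x] (capture-free when r is closed, as in all uses) *)
Fixpoint subst (x : nat) (r : term) (s : term) : term :=
  match s with
  | One => One
  | InT t s' => InT t (subst x r s')
  | OutT t s' => OutT t (subst x r s')
  | OutM m s' => OutM (subst x r m) (subst x r s')
  | InM m s' => InM (subst x r m) (subst x r s')
  | Sum br => Sum (map (fun p => (fst p, subst x r (snd p))) br)
  | Choice br => Choice (map (fun p => (fst p, subst x r (snd p))) br)
  | Mu y s' => if Nat.eqb x y then Mu y s' else Mu y (subst x r s')
  | Var y => if Nat.eqb x y then r else Var y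
  end.

Inductive occurs_free (x : nat) : term -> Prop :=
| of_var : occurs_free x (Var x)
| of_int t s : occurs_free x s -> occurs_free x (InT t s)
| of_outt t s : occurs_free x s -> occurs_free x (OutT t s)
| of_outm_m m s : occurs_free x m -> occurs_free x (OutM m s)
| of_outm_s m s : occurs_free x s -> occurs_free x (OutM m s)
| of_inm_m m s : occurs_free x m -> occurs_free x (InM m s)
| of_inm_s m s : occurs_free x s -> occurs_free x (InM m s)
| of_sum br l s : In (l, s) br -> occurs_free x s -> occurs_free x (Sum br)
| of_choice br l s : In (l, s) br -> occurs_free x s -> occurs_free x (Choice br)
| of_mu y s : y <> x -> occurs_free x s -> occurs_free x (Mu y s).

Definition closed (s : term) : Prop := forall x, ~ occurs_free x s.

Inductive unguarded (x : nat) : term -> Prop :=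
| ug_var : unguarded x (Var x)
| ug_mu y s : y <> x -> unguarded x s -> unguarded x (Mu y s).

Inductive guarded : term -> Prop :=
| g_one : guarded One
| g_var x : guarded (Var x)
| g_int t s : guarded s -> guarded (InT t s)
| g_outt t s : guarded s -> guarded (OutT t s)
| g_outm m s : guarded m -> guarded s -> guarded (OutM m s)
| g_inm m s : guarded m -> guarded s -> guarded (InM m s)
| g_sum br : (forall l s, In (l, s) br -> guarded s) -> guarded (Sum br)
| g_choice br : (forall l s, In (l, s) br -> guarded s) -> guarded (Choice br)
| g_mu x s : ~ unguarded x s -> guarded s -> guarded (Mu x s).

(* grammar side conditions: choices are finite, nonempty, with distinct labels *)
Inductive wf : term -> Prop :=
| wf_one : wf One
| wf_var x : wf (Var x)
| wf_int t s : wf s -> wf (InT t s)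
| wf_outt t s : wf s -> wf (OutT t s)
| wf_outm m s : wf m -> wf s -> wf (OutM m s)
| wf_inm m s : wf m -> wf s -> wf (InM m s)
| wf_sum br : br <> [] -> NoDup (map fst br) ->
    (forall l s, In (l, s) br -> wf s) -> wf (Sum br)
| wf_choice br : br <> [] -> NoDup (map fst br) ->
    (forall l s, In (l, s) br -> wf s) -> wf (Choice br)
| wf_mu x s : wf s -> wf (Mu x s).

Definition SC (s : term) : Prop := wf s /\ closed s /\ guarded s.

Definition preorder_on_SC (B : term -> term -> Prop) : Prop :=
  (forall s t, B s t -> SC s /\ SC t) /\
  (forall s, SC s -> B s s) /\
  (forall s t u, B s t -> B t u -> B s u).

Inductive act : Type :=
| Tick | Tau
| AInT : BT -> act | AOutT : BT -> act
| AOutM : term -> act | AInM : term -> act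
| AInL : L -> act | AOutL : L -> act.

(* LTS; the target of the tick transition of 1 is irrelevant (taken to be 1) *)
Inductive step : term -> act -> term -> Prop :=
| st_one : step One Tick One
| st_int t s : step (InT t s) (AInT t) s
| st_outt t s : step (OutT t s) (AOutT t) s
| st_outm m s : step (OutM m s) (AOutM m) s
| st_inm m s : step (InM m s) (AInM m) s
| st_outl l s : step (Choice [(l, s)]) (AOutL l) s
| st_choice br l s : 1 < length br -> In (l, s) br ->
    step (Choice br) Tau (Choice [(l, s)])
| st_sum br l s : In (l, s) br -> step (Sum br) (AInL l) s
| st_mu x s : step (Mu x s) Tau (subst x (Mu x s) s).

Definition compat (B : term -> term -> Prop) (a1 a2 : act) : Prop :=
  match a1, a2 with
  | AOutL l1, AInL l2 => l1 = l2
  | AInL l1, AOutL l2 => l1 = l2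
  | AOutT t1, AInT t2 => leb t1 t2
  | AInT t1, AOutT t2 => leb t2 t1
  | AOutM s1, AInM s2 => B s1 s2
  | AInM s1, AOutM s2 => B s2 s1
  | _, _ => False
  end.

Inductive sys_tau (B : term -> term -> Prop) :
  term -> term -> term -> term -> Prop :=
| sys_left r s r' : step r Tau r' -> sys_tau B r s r' s
| sys_right r s s' : step s Tau s' -> sys_tau B r s r s'
| sys_sync r s r' s' a1 a2 :
    step r a1 r' -> step s a2 s' -> compat B a1 a2 -> sys_tau B r s r' s'.

Definition compliance_postfix (B R : term -> term -> Prop) : Prop :=
  forall r s, R r s ->
    ((~ exists r' s', sys_tau B r s r' s') ->
       (exists r', step r Tick r') /\ (exists s', step s Tick s')) /\
    (forall r' s', sys_tau B r s r' s' -> R r' s').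

Definition compliant (B : term -> term -> Prop) (r s : term) : Prop :=
  exists R, compliance_postfix B R /\ R r s.

Definition subcontract (B : term -> term -> Prop) (s1 s2 : term) : Prop :=
  forall r, SC r -> compliant B r s1 -> compliant B r s2.

Definition is_mu (s : term) : bool :=
  match s with Mu _ _ => true | _ => false end.

(* graph of unfold *)
Inductive unfold : term -> term -> Prop :=
| uf_mu x s u : unfold (subst x (Mu x s) s) u -> unfold (Mu x s) u
| uf_other s : is_mu s = false -> unfold s s.

Definition S_fun (R B : term -> term -> Prop) (s1 s2 : term) : Prop :=
  exists u1, unfold s1 u1 /\
  match u1 with
  | One => unfold s2 One
  | InT t1 s1' => exists t2 s2',
      unfold s2 (InT t2 s2') /\ R s1' s2' /\ leb t1 t2
  | OutT t1 s1' => exists t2 s2',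
      unfold s2 (OutT t2 s2') /\ R s1' s2' /\ leb t2 t1
  | OutM m1 s1' => exists m2 s2',
      unfold s2 (OutM m2 s2') /\ R s1' s2' /\ B m2 m1
  | InM m1 s1' => exists m2 s2',
      unfold s2 (InM m2 s2') /\ R s1' s2' /\ B m1 m2
  | Sum br1 => exists br2, unfold s2 (Sum br2) /\
      forall l s, In (l, s) br1 -> exists s', In (l, s') br2 /\ R s s'
  | Choice br1 => exists br2, unfold s2 (Choice br2) /\
      (forall l s', In (l, s') br2 -> exists s, In (l, s) br1 /\ R s s')
  | _ => False
  end.

Definition syn_sub (B : term -> term -> Prop) (s1 s2 : term) : Prop :=
  exists R, (forall a b, R a b -> S_fun R B a b) /\ R s1 s2.

End Contracts.

(* Main.v *)
Require Import Defs.
From Stdlib Require Import List RelationClasses Arith Lia Classical ClassicalEpsilon.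
Import ListNotations.

Set Implicit Arguments.

Section S.
Variables BT L : Type.
Notation term := (term BT L).
Implicit Types (r s t u m : term) (br : list (L * term)).

Lemma term_ind' (P : term -> Prop)
  (h1 : P (One _ _))
  (h2 : forall b t, P t -> P (InT b t))
  (h3 : forall b t, P t -> P (OutT b t))
  (h4 : forall m t, P m -> P t -> P (OutM m t))
  (h5 : forall m t, P m -> P t -> P (InM m t))
  (h6 : forall br, (forall l s, In (l, s) br -> P s) -> P (Sum br))
  (h7 : forall br, (forall l s, In (l, s) br -> P s) -> P (Choice br))
  (h8 : forall x t, P t -> P (Mu x t))
  (h9 : forall x, P (Var _ _ x)) : forall t, P t.
Proof.
  fix IH 1. intros t; destruct t.
  - apply h1.
  - apply h2, IH.
  - apply h3, IH.
  - apply h4; apply IH.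
  - apply h5; apply IH.
  - apply h6. assert (Hall : forall p, In p l -> P (snd p)).
    { induction l as [|[l0 s0] br IHbr]; simpl; intros p Hin; [contradiction|].
      destruct Hin as [E|Hin]; [subst p; exact (IH s0) | apply (IHbr p Hin)]. }
    intros l1 s1 Hin; exact (Hall (l1, s1) Hin).
  - apply h7. assert (Hall : forall p, In p l -> P (snd p)).
    { induction l as [|[l0 s0] br IHbr]; simpl; intros p Hin; [contradiction|].
      destruct Hin as [E|Hin]; [subst p; exact (IH s0) | apply (IHbr p Hin)]. }
    intros l1 s1 Hin; exact (Hall (l1, s1) Hin).
  - apply h8, IH.
  - apply h9.
Qed.


Lemma in_mapb (f : term -> term) (br : list (L * term)) (l : L) (s : term) : In (l, s) (map (fun p => (fst p, f (snd p))) br) ->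
  exists s0, In (l, s0) br /\ s = f s0.
Proof.
  intros H; apply in_map_iff in H as [[l0 s0] [E Hin]]; simpl in E.
  inversion E; subst; eauto.
Qed.

Lemma in_mapb' (f : term -> term) (br : list (L * term)) (l : L) (s0 : term) : In (l, s0) br ->
  In (l, f s0) (map (fun p => (fst p, f (snd p))) br).
Proof.
  intros H; apply in_map_iff; exists (l, s0); auto.
Qed.

Lemma map_fst_mapb (f : term -> term) (br : list (L*term)) :
  map fst (map (fun p => (fst p, f (snd p))) br) = map fst br.
Proof. rewrite map_map; reflexivity. Qed.

Lemma ug_of x t : unguarded x t -> occurs_free x t.
Proof. induction 1; constructor; auto. Qed.

Lemma of_subst x (r : term) z s : closed r ->
  occurs_free z (subst x r s) -> occurs_free z s /\ z <> x.
Proof.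
  intros Hr. revert s. refine (term_ind' _ _ _ _ _ _ _ _ _ _); simpl.
  - intros H; inversion H.
  - intros b t IH H; inversion H; subst. destruct (IH H1); split; auto; constructor; auto.
  - intros b t IH H; inversion H; subst. destruct (IH H1); split; auto; constructor; auto.
  - intros m t IHm IH H; inversion H; subst.
    + destruct (IHm H1); split; auto; constructor; auto.
    + destruct (IH H1); split; auto; apply of_outm_s; auto.
  - intros m t IHm IH H; inversion H; subst.
    + destruct (IHm H1); split; auto; constructor; auto.
    + destruct (IH H1); split; auto; apply of_inm_s; auto.
  - intros br IH H; inversion H; subst.
    apply in_mapb in H1 as [s0 [Hin ->]]. destruct (IH _ _ Hin H2); split; auto.
    econstructor; eauto.
  - intros br IH H; inversion H; subst.
    apply in_mapb in H1 as [s0 [Hin ->]]. destruct (IH _ _ Hin H2); split; auto.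
    econstructor; eauto.
  - intros y t IH H. destruct (Nat.eqb_spec x y).
    + subst; inversion H; subst; split; auto.
    + inversion H; subst. match goal with Hh : occurs_free _ (subst _ _ _) |- _ => destruct (IH Hh) end; split; auto; constructor; auto.
  - intros y H. destruct (Nat.eqb_spec x y).
    + exfalso; apply (Hr z H).
    + inversion H; subst; split; auto; constructor.
Qed.

Lemma ug_subst x (r : term) z s : closed r ->
  unguarded z (subst x r s) -> unguarded z s.
Proof.
  intros Hr. revert s. refine (term_ind' _ _ _ _ _ _ _ _ _ _); simpl;
    try (intros; match goal with H : unguarded _ _ |- _ => inversion H end; fail).
  - intros y t IH H. destruct (Nat.eqb_spec x y); auto.
    inversion H; subst; constructor; auto.
  - intros y H. destruct (Nat.eqb_spec x y); auto.
    exfalso; apply (Hr z), ug_of; auto.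
Qed.

Lemma wf_subst x (r : term) s : wf r -> wf s -> wf (subst x r s).
Proof.
  intros Hr. revert s. refine (term_ind' _ _ _ _ _ _ _ _ _ _); simpl; intros.
  - constructor.
  - inversion H0; constructor; auto.
  - inversion H0; constructor; auto.
  - inversion H1; constructor; auto.
  - inversion H1; constructor; auto.
  - inversion H0; subst. constructor.
    + destruct br; simpl; congruence.
    + rewrite map_fst_mapb; auto.
    + intros l s Hin; apply in_mapb in Hin as [s0 [Hin ->]]; eauto.
  - inversion H0; subst. constructor.
    + destruct br; simpl; congruence.
    + rewrite map_fst_mapb; auto.
    + intros l s Hin; apply in_mapb in Hin as [s0 [Hin ->]]; eauto.
  - inversion H0; subst. destruct (Nat.eqb x x0); constructor; auto.
  - destruct (Nat.eqb x x0); auto.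
Qed.

Lemma guarded_subst x (r : term) s : closed r -> guarded r -> guarded s -> guarded (subst x r s).
Proof.
  intros Hc Hr. revert s. refine (term_ind' _ _ _ _ _ _ _ _ _ _); simpl; intros.
  - constructor.
  - inversion H0; constructor; auto.
  - inversion H0; constructor; auto.
  - inversion H1; constructor; auto.
  - inversion H1; constructor; auto.
  - inversion H0; subst. constructor.
    intros l s Hin; apply in_mapb in Hin as [s0 [Hin ->]]; eauto.
  - inversion H0; subst. constructor.
    intros l s Hin; apply in_mapb in Hin as [s0 [Hin ->]]; eauto.
  - inversion H0; subst. destruct (Nat.eqb x x0); auto.
    constructor; auto. intro U; apply ug_subst in U; auto.
  - destruct (Nat.eqb x x0); auto; constructor.
Qed.

Lemma SC_mu x s : SC (Mu x s) -> SC (subst x (Mu x s) s).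
Proof.
  intros (W & C & G). inversion W; inversion G; subst.
  split; [|split].
  - apply wf_subst; auto.
  - intros z Hz. apply of_subst in Hz as [Hz Hne]; auto.
    apply (C z); constructor; auto.
  - apply guarded_subst; auto.
Qed.


Lemma SC_InT b s : SC (InT b s) -> SC s.
Proof. intros (W&C&G); inversion W; inversion G; split; [|split]; auto.
  intros z Hz; apply (C z); constructor; auto. Qed.
Lemma SC_OutT b s : SC (OutT b s) -> SC s.
Proof. intros (W&C&G); inversion W; inversion G; split; [|split]; auto.
  intros z Hz; apply (C z); constructor; auto. Qed.
Lemma SC_OutM m s : SC (OutM m s) -> SC m /\ SC s.
Proof. intros (W&C&G); inversion W; inversion G; split; (split; [|split]); auto;
  intros z Hz; apply (C z); [apply of_outm_m|apply of_outm_s]; auto. Qed.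
Lemma SC_InM m s : SC (InM m s) -> SC m /\ SC s.
Proof. intros (W&C&G); inversion W; inversion G; split; (split; [|split]); auto;
  intros z Hz; apply (C z); [apply of_inm_m|apply of_inm_s]; auto. Qed.
Lemma SC_Sum br l s : SC (Sum br) -> In (l, s) br -> SC s.
Proof. intros (W&C&G) Hin; inversion W; inversion G; subst; split; [|split]; eauto.
  intros z Hz; apply (C z); econstructor; eauto. Qed.
Lemma SC_Choice br l s : SC (Choice br) -> In (l, s) br -> SC s.
Proof. intros (W&C&G) Hin; inversion W; inversion G; subst; split; [|split]; eauto.
  intros z Hz; apply (C z); econstructor; eauto. Qed.
Lemma SC_Var x : SC (Var BT L x) -> False.
Proof. intros (W&C&G). apply (C x); constructor. Qed.

Lemma unfold_det s u1 u2 : unfold s u1 -> unfold s u2 -> u1 = u2.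
Proof.
  intros H; revert u2; induction H; intros u2 H2; inversion H2; subst; auto;
  try discriminate.
Qed.

Lemma unfold_nomu s u : unfold s u -> is_mu u = false.
Proof. induction 1; auto. Qed.

Lemma unfold_self s u : unfold s u -> is_mu s = false -> s = u.
Proof. intros H; inversion H; subst; simpl; auto; discriminate. Qed.

Lemma unfold_SC s u : unfold s u -> SC s -> SC u.
Proof. induction 1; auto. intros; apply IHunfold, SC_mu; auto. Qed.

Fixpoint mus t : nat := match t with Mu _ s => S (mus s) | _ => 0 end.
Fixpoint core t : term := match t with Mu _ s => core s | _ => t end.
Definition notvar t : Prop := match t with Var _ _ _ => False | _ => True end.

Lemma core_subst x r s : notvar (core s) ->
  notvar (core (subst x r s)) /\ mus (subst x r s) = mus s.
Proof.
  induction s; simpl; intros H; auto.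
  - destruct (Nat.eqb x n); simpl; auto.
    destruct (IHs H); split; auto.
  - contradiction.
Qed.

Lemma unfold_ex_core n : forall s, mus s = n -> notvar (core s) -> exists u, unfold s u.
Proof.
  induction n; intros s Hm Hc.
  - destruct s; try discriminate; eexists; apply uf_other; reflexivity.
  - destruct s; try discriminate.
    simpl in Hm, Hc. injection Hm as Hm.
    destruct (core_subst n0 (Mu n0 s) s Hc) as [Hc' Hm'].
    destruct (IHn (subst n0 (Mu n0 s) s)) as [u Hu]; auto; try congruence.
    exists u; constructor; auto.
Qed.

Lemma guarded_core s z : guarded s -> core s = Var BT L z -> unguarded z s.
Proof.
  induction s; simpl; intros G E; try discriminate.
  - inversion G; subst. specialize (IHs H2 E).
    destruct (Nat.eq_dec n z); [subst; contradiction|]. constructor; auto.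
  - inversion E; constructor.
Qed.

Lemma unfold_ex s : SC s -> exists u, unfold s u.
Proof.
  intros (W&C&G). apply (unfold_ex_core (n := mus s)); auto.
  destruct (core s) eqn:E; simpl; auto.
  apply (C n), ug_of, guarded_core; auto.
Qed.

End S.

Set Implicit Arguments.

Section C.
Variables (BT L : Type) (leb : BT -> BT -> Prop) (B : term BT L -> term BT L -> Prop).
Notation term := (term BT L).
Implicit Types (r s t u m : term) (br : list (L * term)).
Notation comp := (compliant leb B).
Notation st := (sys_tau leb B).

Lemma comp_postfix : compliance_postfix leb B comp.
Proof.
  intros r s [R [HR Hrs]]; destruct (HR r s Hrs) as [h1 h2]; split; auto.
  intros r' s' H; exists R; split; auto.
Qed.

Lemma comp_step r s r' s' : comp r s -> st r s r' s' -> comp r' s'.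
Proof. intros H; apply comp_postfix; auto. Qed.

Lemma comp_stuck r s : comp r s -> (~ exists r' s', st r s r' s') ->
  (exists r', step r (Tick _ _) r') /\ (exists s', step s (Tick _ _) s').
Proof. intros H; apply comp_postfix; auto. Qed.

Lemma comp_intro r s :
  ((~ exists r' s', st r s r' s') ->
     (exists r', step r (Tick _ _) r') /\ (exists s', step s (Tick _ _) s')) ->
  (forall r' s', st r s r' s' -> comp r' s') -> comp r s.
Proof.
  intros H1 H2. exists (fun a b => (a = r /\ b = s) \/ comp a b); split; auto.
  intros a b [[-> ->]|Hc]; split.
  - auto.
  - intros; right; auto.
  - apply comp_postfix; auto.
  - intros; right; eapply comp_step; eauto.
Qed.

Lemma step_tick s s' : step s (Tick _ _) s' -> s = One _ _.
Proof. intros H; inversion H; auto. Qed.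

Lemma step_mu x s a t : step (Mu x s) a t -> a = (Tau _ _) /\ t = subst x (Mu x s) s.
Proof. intros H; inversion H; auto. Qed.

Lemma compat_tau a : compat leb B a (Tau _ _) -> False.
Proof. destruct a; simpl; auto. Qed.

Lemma comp_mu_back r x s : comp r (subst x (Mu x s) s) -> comp r (Mu x s).
Proof.
  intros H. exists (fun a b => comp a b \/ (b = Mu x s /\ comp a (subst x (Mu x s) s))).
  split; [|auto].
  intros a b [Hc|[-> Hc]]; split.
  - apply comp_postfix; auto.
  - intros; left; eapply comp_step; eauto.
  - intros Hn; exfalso; apply Hn; do 2 eexists; apply sys_right; constructor.
  - intros a' b' Hs; inversion Hs; subst.
    + right; split; auto. eapply comp_step; eauto. apply sys_left; auto.
    + apply step_mu in H0 as [_ ->]; auto.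
    + apply step_mu in H1 as [-> _]. exfalso; eapply compat_tau; eauto.
Qed.

Lemma comp_unfold_back r s u : unfold s u -> comp r u -> comp r s.
Proof. induction 1; auto. intros; apply comp_mu_back; auto. Qed.

Lemma comp_unfold r s u : unfold s u -> comp r s -> comp r u.
Proof.
  induction 1; auto. intros; apply IHunfold. eapply comp_step; eauto.
  apply sys_right; constructor.
Qed.

Lemma force_sync r s : comp r s -> (forall r', ~ step r (Tau _ _) r') ->
  (forall s', ~ step s (Tau _ _) s') -> (forall r', ~ step r (Tick _ _) r') ->
  exists a r' b s', step r a r' /\ step s b s' /\ compat leb B a b.
Proof.
  intros H h1 h2 h3. apply NNPP; intros Hn.
  destruct (comp_stuck H) as [[r' Hr] _]; [|eapply h3; eauto].
  intros [r' [s' Hs]]; inversion Hs; subst.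
  - eapply h1; eauto.
  - eapply h2; eauto.
  - apply Hn; do 4 eexists; eauto.
Qed.

End C.

Set Implicit Arguments.

Ltac inv H := inversion H; subst; clear H.

Lemma nodup_fun {A T : Type} {br : list (A * T)} {l s s'} :
  NoDup (map fst br) -> In (l, s) br -> In (l, s') br -> s = s'.
Proof.
  induction br as [|[l0 s0] br IH]; simpl; [contradiction|].
  intros N H1 H2; inv N.
  destruct H1 as [E1|H1], H2 as [E2|H2]; try congruence.
  - inv E1. exfalso; apply H3. apply (in_map fst) in H2; auto.
  - inv E2. exfalso; apply H3. apply (in_map fst) in H1; auto.
  - eauto.
Qed.

Section Sound.
Variables (BT L : Type) (leb : BT -> BT -> Prop) (B : term BT L -> term BT L -> Prop).
Hypothesis leb_trans : forall a b c, leb a b -> leb b c -> leb a c.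
Hypothesis B_trans : forall a b c, B a b -> B b c -> B a c.
Notation term := (term BT L).
Implicit Types (r s u : term) (br : list (L * term)).
Notation comp := (compliant leb B).
Notation st := (sys_tau leb B).
Variable R : term -> term -> Prop.
Hypothesis HR : forall a b, R a b -> S_fun leb R B a b.

Definition M (u1 s2 : term) : Prop :=
  match u1 with
  | One _ _ => unfold s2 (One _ _)
  | InT t1 s1' => exists t2 s2',
      unfold s2 (InT t2 s2') /\ R s1' s2' /\ leb t1 t2
  | OutT t1 s1' => exists t2 s2',
      unfold s2 (OutT t2 s2') /\ R s1' s2' /\ leb t2 t1
  | OutM m1 s1' => exists m2 s2',
      unfold s2 (OutM m2 s2') /\ R s1' s2' /\ B m2 m1
  | InM m1 s1' => exists m2 s2',
      unfold s2 (InM m2 s2') /\ R s1' s2' /\ B m1 m2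
  | Sum br1 => exists br2, unfold s2 (Sum br2) /\
      forall l s, In (l, s) br1 -> exists s', In (l, s') br2 /\ R s s'
  | Choice br1 => exists br2, unfold s2 (Choice br2) /\
      (forall l s', In (l, s') br2 -> exists s, In (l, s) br1 /\ R s s')
  | _ => False
  end.

Lemma HR' a b : R a b -> exists u1, unfold a u1 /\ M u1 b.
Proof. intros H; exact (HR H). Qed.

Lemma unfold_mu_inv x s X : unfold (Mu x s) X -> unfold (subst x (Mu x s) s) X.
Proof. intros H; inv H; auto. discriminate. Qed.

Lemma M_mu u1 x s : M u1 (Mu x s) -> M u1 (subst x (Mu x s) s).
Proof.
  destruct u1; simpl; try contradiction.
  - apply unfold_mu_inv.
  - intros (a & b' & h1 & h2 & h3); exists a, b'; split; [apply unfold_mu_inv; auto| auto].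
  - intros (a & b' & h1 & h2 & h3); exists a, b'; split; [apply unfold_mu_inv; auto| auto].
  - intros (a & b' & h1 & h2 & h3); exists a, b'; split; [apply unfold_mu_inv; auto| auto].
  - intros (a & b' & h1 & h2 & h3); exists a, b'; split; [apply unfold_mu_inv; auto| auto].
  - intros (a & h1 & h2); exists a; split; [apply unfold_mu_inv; auto| auto].
  - intros (a & h1 & h2); exists a; split; [apply unfold_mu_inv; auto| auto].
Qed.

Definition R' (rho s2 : term) : Prop :=
  exists u1, comp rho u1 /\ is_mu u1 = false /\ M u1 s2 /\ wf s2.

Lemma force_sync' r s : comp r s -> (forall r', ~ step r (Tau _ _) r') ->
  (forall s', ~ step s (Tau _ _) s') -> (forall s', ~ step s (Tick _ _) s') ->
  exists a r' b s', step r a r' /\ step s b s' /\ compat leb B a b.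
Proof.
  intros H h1 h2 h3. apply NNPP; intros Hn.
  destruct (comp_stuck H) as [_ [s' Hs]]; [|eapply h3; eauto].
  intros [r' [s' Hs]]; inversion Hs; subst.
  - eapply h1; eauto.
  - eapply h2; eauto.
  - apply Hn; do 4 eexists; eauto.
Qed.

Lemma R'_cont rho u s' : comp rho u -> R u s' -> wf s' -> R' rho s'.
Proof.
  intros Hc HRu W. destruct (HR' HRu) as [u1 [Hu HM]].
  exists u1; repeat split; auto.
  - eapply comp_unfold; eauto.
  - eapply unfold_nomu; eauto.
Qed.

Ltac notau := let x := fresh in intros ? x; inversion x; subst; simpl in *; try lia.

Lemma comp_single rho br l s : comp rho (Choice br) -> In (l, s) br ->
  comp rho (Choice [(l, s)]).
Proof.
  intros Hc Hin. destruct (Nat.lt_ge_cases 1 (length br)).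
  - eapply comp_step; eauto. apply sys_right; constructor; auto.
  - destruct br as [|p [|q br]]; simpl in *; try lia; try contradiction.
    destruct Hin as [<-|[]]; auto.
Qed.

Ltac solveM := simpl; repeat match goal with |- exists _, _ => eexists | |- _ /\ _ => split end;
  try (constructor; reflexivity); eauto.
Ltac left_tau := match goal with Hc : compliant _ _ ?r ?u |- R' _ _ =>
  exists u; split; [eapply comp_step; [exact Hc|apply sys_left; eassumption]|split; [auto|split; [solveM|auto]]] end.

Lemma R'_postfix : compliance_postfix leb B R'.
Proof.
  intros rho s2 [u1 (Hc & Hmu & HM & W)].
  destruct (is_mu s2) eqn:E2.
  { destruct s2; try discriminate. split.
    - intros Hn; exfalso; apply Hn; do 2 eexists; apply sys_right; constructor.
    - intros r' s' Hs; inversion Hs as [r0 s0 r0' Hst|r0 s0 s0' Hst|r0 s0 r0' s0' a1 a2 Hst1 Hst2 Hcp]; subst; clear Hs.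
      + exists u1; repeat split; auto. eapply comp_step; eauto. apply sys_left; auto.
      + apply step_mu in Hst as [_ ->]. exists u1; repeat split; auto.
        apply M_mu; auto. inv W; apply wf_subst; auto; constructor; auto.
      + apply step_mu in Hst2 as [-> _]. exfalso; eapply compat_tau; eauto. }
  destruct u1; simpl in HM; try discriminate; try contradiction.
  -
    apply unfold_self in HM; auto; subst. split.
    + intros Hn; apply (comp_stuck Hc Hn).
    + intros r' s' Hs; inversion Hs as [r0 s0 r0' Hst|r0 s0 s0' Hst|r0 s0 r0' s0' a1 a2 Hst1 Hst2 Hcp]; subst; clear Hs.
      * left_tau.
      * inv Hst.
      * inv Hst2; destruct a1; simpl in Hcp; contradiction.
  -
    destruct HM as (t2 & s2' & Hu & HRs & Hl).
    apply unfold_self in Hu; auto; subst. split.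
    + intros Hn; exfalso.
      destruct (force_sync' Hc) as (a & r' & b' & u' & h1 & h2 & h3).
      * intros r' Hr; apply Hn; do 2 eexists; apply sys_left; eauto.
      * notau.
      * notau.
      * inv h2. destruct a; simpl in h3; try contradiction.
        apply Hn; do 2 eexists; eapply sys_sync; eauto; [constructor|]; simpl; eauto.
    + intros r' s' Hs; inversion Hs as [r0 s0 r0' Hst|r0 s0 s0' Hst|r0 s0 r0' s0' a1 a2 Hst1 Hst2 Hcp]; subst; clear Hs.
      * left_tau.
      * inv Hst.
      * inv Hst2. destruct a1; simpl in Hcp; try contradiction. inv Hst1.
        destruct (force_sync' Hc) as (a & r'' & b' & u' & h1 & h2 & h3).
        -- notau.
        -- notau.
        -- notau.
        -- inv h1. inv h2. simpl in h3. inv W.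
           eapply R'_cont; eauto. eapply comp_step; eauto. eapply sys_sync; [constructor|constructor|simpl; eauto].
  -
    destruct HM as (t2 & s2' & Hu & HRs & Hl).
    apply unfold_self in Hu; auto; subst. split.
    + intros Hn; exfalso.
      destruct (force_sync' Hc) as (a & r' & b' & u' & h1 & h2 & h3).
      * intros r' Hr; apply Hn; do 2 eexists; apply sys_left; eauto.
      * notau.
      * notau.
      * inv h2. destruct a; simpl in h3; try contradiction.
        apply Hn; do 2 eexists; eapply sys_sync; eauto; [constructor|]; simpl; eauto.
    + intros r' s' Hs; inversion Hs as [r0 s0 r0' Hst|r0 s0 s0' Hst|r0 s0 r0' s0' a1 a2 Hst1 Hst2 Hcp]; subst; clear Hs.
      * left_tau.
      * inv Hst.
      * inv Hst2. destruct a1; simpl in Hcp; try contradiction. inv Hst1.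
        destruct (force_sync' Hc) as (a & r'' & b' & u' & h1 & h2 & h3).
        -- notau.
        -- notau.
        -- notau.
        -- inv h1. inv h2. simpl in h3. inv W.
           eapply R'_cont; eauto. eapply comp_step; eauto. eapply sys_sync; [constructor|constructor|simpl; eauto].
  -
    destruct HM as (m2 & s2' & Hu & HRs & Hl).
    apply unfold_self in Hu; auto; subst. split.
    + intros Hn; exfalso.
      destruct (force_sync' Hc) as (a & r' & b' & u' & h1 & h2 & h3).
      * intros r' Hr; apply Hn; do 2 eexists; apply sys_left; eauto.
      * notau.
      * notau.
      * inv h2. destruct a; simpl in h3; try contradiction.
        apply Hn; do 2 eexists; eapply sys_sync; eauto; [constructor|]; simpl; eauto.
    + intros r' s' Hs; inversion Hs as [r0 s0 r0' Hst|r0 s0 s0' Hst|r0 s0 r0' s0' a1 a2 Hst1 Hst2 Hcp]; subst; clear Hs.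
      * left_tau.
      * inv Hst.
      * inv Hst2. destruct a1; simpl in Hcp; try contradiction. inv Hst1.
        destruct (force_sync' Hc) as (a & r'' & b' & u' & h1 & h2 & h3).
        -- notau.
        -- notau.
        -- notau.
        -- inv h1. inv h2. simpl in h3. inv W.
           eapply R'_cont; eauto. eapply comp_step; eauto. eapply sys_sync; [constructor|constructor|simpl; eauto].
  -
    destruct HM as (m2 & s2' & Hu & HRs & Hl).
    apply unfold_self in Hu; auto; subst. split.
    + intros Hn; exfalso.
      destruct (force_sync' Hc) as (a & r' & b' & u' & h1 & h2 & h3).
      * intros r' Hr; apply Hn; do 2 eexists; apply sys_left; eauto.
      * notau.
      * notau.
      * inv h2. destruct a; simpl in h3; try contradiction.
        apply Hn; do 2 eexists; eapply sys_sync; eauto; [constructor|]; simpl; eauto.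
    + intros r' s' Hs; inversion Hs as [r0 s0 r0' Hst|r0 s0 s0' Hst|r0 s0 r0' s0' a1 a2 Hst1 Hst2 Hcp]; subst; clear Hs.
      * left_tau.
      * inv Hst.
      * inv Hst2. destruct a1; simpl in Hcp; try contradiction. inv Hst1.
        destruct (force_sync' Hc) as (a & r'' & b' & u' & h1 & h2 & h3).
        -- notau.
        -- notau.
        -- notau.
        -- inv h1. inv h2. simpl in h3. inv W.
           eapply R'_cont; eauto. eapply comp_step; eauto. eapply sys_sync; [constructor|constructor|simpl; eauto].
  -
    destruct HM as (br2 & Hu & Hbr).
    apply unfold_self in Hu; auto; subst. split.
    + intros Hn; exfalso.
      destruct (force_sync' Hc) as (a & r' & b' & u' & h1 & h2 & h3).
      * intros r' Hr; apply Hn; do 2 eexists; apply sys_left; eauto.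
      * notau.
      * notau.
      * inv h2. destruct a; simpl in h3; try contradiction. subst.
        destruct (Hbr _ _ H0) as (s' & Hin & _).
        apply Hn; do 2 eexists; eapply sys_sync; eauto; [constructor; eauto|]; simpl; eauto.
    + intros r' s' Hs; inversion Hs as [r0 s0 r0' Hst|r0 s0 s0' Hst|r0 s0 r0' s0' a1 a2 Hst1 Hst2 Hcp]; subst; clear Hs.
      * left_tau.
      * inv Hst.
      * inv Hst2. destruct a1; simpl in Hcp; try contradiction. subst. inv Hst1.
        destruct (force_sync' Hc) as (a & r'' & b' & u' & h1 & h2 & h3).
        -- notau.
        -- notau.
        -- notau.
        -- inv h1; [|simpl in *; lia]. inv h2. simpl in h3. subst. inv W.
           destruct (Hbr _ _ H1) as (s'' & Hin & HRs).
           rewrite (nodup_fun H3 H0 Hin) in *.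
           eapply R'_cont; [| exact HRs | eapply H4; eauto].
           eapply comp_step; eauto. eapply sys_sync; [constructor|constructor; eauto|reflexivity].
  -
    destruct HM as (br2 & Hu & Hbr).
    apply unfold_self in Hu; auto; subst. split.
    + intros Hn; exfalso.
      assert (Hlen : length br2 <= 1).
      { destruct (Nat.lt_ge_cases 1 (length br2)); auto. exfalso.
        destruct br2 as [|[l0 s0] br2]; simpl in *; [lia|].
        apply Hn; do 2 eexists; apply sys_right; apply st_choice with (l := l0) (s := s0); simpl; auto. }
      inv W. destruct br2 as [|[l0 s0] [|q br2]]; simpl in *; try congruence; try lia.
      destruct (Hbr l0 s0 (or_introl eq_refl)) as (s & Hin & _).
      pose proof (comp_single _ _ Hc Hin) as Hc1.
      destruct (force_sync' Hc1) as (a & r' & b' & u' & h1 & h2 & h3).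
      * intros r' Hr; apply Hn; do 2 eexists; apply sys_left; eauto.
      * notau.
      * notau.
      * inv h2; [|simpl in *; lia]. destruct a; simpl in h3; try contradiction. subst.
        apply Hn; do 2 eexists; eapply sys_sync; eauto; [constructor|]; simpl; eauto.
    + intros r' s' Hs; inversion Hs as [r0 s0 r0' Hst|r0 s0 s0' Hst|r0 s0 r0' s0' a1 a2 Hst1 Hst2 Hcp]; subst; clear Hs.
      * left_tau.
      * inv Hst. exists (Choice l). split; [exact Hc|]. split; [reflexivity|]. split.
        -- exists [(l0, s)]; split; [constructor; reflexivity|].
           intros l1 s1 [E|[]]; inv E. auto.
        -- inv W. constructor; simpl; try congruence; eauto.
           ++ constructor; auto. constructor.
           ++ intros l1 s1 [E|[]]; inv E; eauto.
      * inv Hst2; [|exfalso; eapply compat_tau; eauto]. destruct a1; simpl in Hcp; try contradiction. subst.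
        destruct (Hbr l0 s' (or_introl eq_refl)) as (s & Hin & HRs).
        pose proof (comp_single _ _ Hc Hin) as Hc1. inv W.
        eapply R'_cont; [| exact HRs | eapply H2; left; eauto].
        eapply comp_step; [exact Hc1|]. eapply sys_sync; [eassumption|constructor|reflexivity].
Qed.

Lemma soundness s1 s2 : syn_sub leb B s1 s2 -> False.
Abort.

End Sound.

Lemma soundness (BT L : Type) (leb : BT -> BT -> Prop) (B : term BT L -> term BT L -> Prop)
  (lt : forall a b c, leb a b -> leb b c -> leb a c)
  (Bt : forall a b c, B a b -> B b c -> B a c) s1 s2 :
  wf s2 -> syn_sub leb B s1 s2 -> subcontract leb B s1 s2.
Proof.
  intros W [R [HR Hs]] r _ Hc.
  exists (R' leb B R); split.
  - exact (@R'_postfix BT L leb B lt Bt R HR).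
  - destruct (@HR' BT L leb B R HR _ _ Hs) as [u1 [Hu HM]].
    exists u1; repeat split; auto.
    + eapply comp_unfold; eauto.
    + eapply unfold_nomu; eauto.
Qed.

Set Implicit Arguments.

Section Dual.
Variables (BT L : Type).
Notation term := (term BT L).
Implicit Types (r s u v w : term) (br : list (L * term)) (rho : nat -> option term).

Definition rem rho x : nat -> option term := fun z => if Nat.eqb z x then None else rho z.
Definition upd rho x w : nat -> option term := fun z => if Nat.eqb z x then Some w else rho z.
Definition none : nat -> option term := fun _ => None.

Fixpoint ssubst rho (t : term) : term :=
  match t with
  | One _ _ => One _ _
  | InT b s => InT b (ssubst rho s)
  | OutT b s => OutT b (ssubst rho s)
  | OutM m s => OutM (ssubst rho m) (ssubst rho s)
  | InM m s => InM (ssubst rho m) (ssubst rho s)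
  | Sum br => Sum (map (fun p => (fst p, ssubst rho (snd p))) br)
  | Choice br => Choice (map (fun p => (fst p, ssubst rho (snd p))) br)
  | Mu x s => Mu x (ssubst (rem rho x) s)
  | Var _ _ x => match rho x with Some w => w | None => Var _ _ x end
  end.

Fixpoint dualc rho (t : term) : term :=
  match t with
  | One _ _ => One _ _
  | InT b s => OutT b (dualc rho s)
  | OutT b s => InT b (dualc rho s)
  | OutM m s => InM (ssubst rho m) (dualc rho s)
  | InM m s => OutM (ssubst rho m) (dualc rho s)
  | Sum br => Choice (map (fun p => (fst p, dualc rho (snd p))) br)
  | Choice br => Sum (map (fun p => (fst p, dualc rho (snd p))) br)
  | Mu x s => Mu x (dualc (upd rho x (ssubst rho (Mu x s))) s)
  | Var _ _ x => Var _ _ x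
  end.

Definition dual t := dualc none t.

Ltac mapext IH := f_equal; apply map_ext_in; intros [l0 s0] Hin0; simpl; f_equal; eapply IH; eauto.

Lemma ssubst_ext : forall t rho1 rho2, (forall z, occurs_free z t -> rho1 z = rho2 z) ->
  ssubst rho1 t = ssubst rho2 t.
Proof.
  refine (term_ind' _ _ _ _ _ _ _ _ _ _); simpl; intros.
  - auto.
  - f_equal; apply H; intros; apply H0; constructor; auto.
  - f_equal; apply H; intros; apply H0; constructor; auto.
  - f_equal; [apply H|apply H0]; intros; apply H1; [apply of_outm_m|apply of_outm_s]; auto.
  - f_equal; [apply H|apply H0]; intros; apply H1; [apply of_inm_m|apply of_inm_s]; auto.
  - f_equal; apply map_ext_in; intros [l0 s0] Hin0; simpl; f_equal; eapply H; eauto.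
    intros; apply H0; econstructor; eauto.
  - f_equal; apply map_ext_in; intros [l0 s0] Hin0; simpl; f_equal; eapply H; eauto.
    intros; apply H0; econstructor; eauto.
  - f_equal; apply H; intros z Hz; unfold rem. destruct (Nat.eqb_spec z x); auto.
    apply H0; constructor; auto.
  - rewrite (H x); auto. constructor.
Qed.

Lemma dualc_ext : forall t rho1 rho2, (forall z, occurs_free z t -> rho1 z = rho2 z) ->
  dualc rho1 t = dualc rho2 t.
Proof.
  refine (term_ind' _ _ _ _ _ _ _ _ _ _); simpl; intros.
  - auto.
  - f_equal; apply H; intros; apply H0; constructor; auto.
  - f_equal; apply H; intros; apply H0; constructor; auto.
  - f_equal; [apply ssubst_ext|apply H0]; intros; apply H1; [apply of_outm_m|apply of_outm_s]; auto.
  - f_equal; [apply ssubst_ext|apply H0]; intros; apply H1; [apply of_inm_m|apply of_inm_s]; auto.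
  - f_equal; apply map_ext_in; intros [l0 s0] Hin0; simpl; f_equal; eapply H; eauto.
    intros; apply H0; econstructor; eauto.
  - f_equal; apply map_ext_in; intros [l0 s0] Hin0; simpl; f_equal; eapply H; eauto.
    intros; apply H0; econstructor; eauto.
  - f_equal; apply H; intros z Hz; unfold upd. destruct (Nat.eqb_spec z x); auto.
    + f_equal. apply (ssubst_ext (t := Mu x t)); auto.
    + apply H0; constructor; auto.
  - auto.
Qed.

Lemma ssubst_none : forall t, ssubst none t = t.
Proof.
  refine (term_ind' _ _ _ _ _ _ _ _ _ _); simpl; intros; try congruence.
  - f_equal. rewrite <- (map_id br) at 2. apply map_ext_in; intros [l0 s0] Hin0; simpl; f_equal; eauto.
  - f_equal. rewrite <- (map_id br) at 2. apply map_ext_in; intros [l0 s0] Hin0; simpl; f_equal; eauto.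
  - f_equal. rewrite <- H at 2. apply ssubst_ext; intros; unfold rem, none.
    destruct (Nat.eqb z x); auto.
Qed.

Lemma ssubst_closed rho t : closed t -> ssubst rho t = t.
Proof.
  intros C. rewrite <- (ssubst_none t) at 2. apply ssubst_ext; intros z Hz; exfalso; apply (C z Hz).
Qed.

Definition vclosed rho := forall y w, rho y = Some w -> closed w.

Lemma vclosed_rem rho x : vclosed rho -> vclosed (rem rho x).
Proof. unfold vclosed, rem; intros H y w; destruct (Nat.eqb y x); eauto; discriminate. Qed.

Lemma of_ssubst z : forall m rho, vclosed rho -> occurs_free z (ssubst rho m) -> occurs_free z m /\ rho z = None.
Proof.
  refine (term_ind' _ _ _ _ _ _ _ _ _ _); simpl; intros;
  [match goal with H : occurs_free _ _ |- _ => inversion H; subst end..|].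
  - destruct (H _ H0 H3); split; auto; constructor; auto.
  - destruct (H _ H0 H3); split; auto; constructor; auto.
  - destruct (H _ H1 H4); split; auto; apply of_outm_m; auto.
  - destruct (H0 _ H1 H4); split; auto; apply of_outm_s; auto.
  - destruct (H _ H1 H4); split; auto; apply of_inm_m; auto.
  - destruct (H0 _ H1 H4); split; auto; apply of_inm_s; auto.
  - apply in_mapb in H3 as [s0 [Hin ->]]. destruct (H _ _ Hin _ H0 H4); split; auto; econstructor; eauto.
  - apply in_mapb in H3 as [s0 [Hin ->]]. destruct (H _ _ Hin _ H0 H4); split; auto; econstructor; eauto.
  - destruct (H _ (vclosed_rem x H0) H5) as [h1 h2]. unfold rem in h2.
    destruct (Nat.eqb_spec z x); [congruence|]. split; auto; constructor; auto.
  - destruct (rho x) eqn:E.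
    + exfalso; eapply H; eauto.
    + inversion H0; subst; split; auto; constructor.
Qed.


Lemma vclosed_upd rho x w : vclosed rho -> closed w -> vclosed (upd rho x w).
Proof. unfold vclosed, upd; intros H C y w'; destruct (Nat.eqb y x); eauto; intros E; inversion E; subst; auto. Qed.

Lemma vclosed_none : vclosed none.
Proof. unfold vclosed, none; discriminate. Qed.

Lemma ssubst_pw t rho1 rho2 : (forall z, rho1 z = rho2 z) -> ssubst rho1 t = ssubst rho2 t.
Proof. intros; apply ssubst_ext; auto. Qed.

Lemma dualc_pw t rho1 rho2 : (forall z, rho1 z = rho2 z) -> dualc rho1 t = dualc rho2 t.
Proof. intros; apply dualc_ext; auto. Qed.

Lemma subst_ssubst x v : closed v -> forall m rho,
  ssubst rho (subst x v m) = ssubst (upd rho x v) m.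
Proof.
  intros C. refine (term_ind' _ _ _ _ _ _ _ _ _ _); simpl; intros; try congruence.
  - f_equal; rewrite map_map; apply map_ext_in; intros [l0 s0] Hin0; simpl; f_equal; eauto.
  - f_equal; rewrite map_map; apply map_ext_in; intros [l0 s0] Hin0; simpl; f_equal; eauto.
  - destruct (Nat.eqb_spec x x0); simpl.
    + subst; f_equal; apply ssubst_pw; intros z; unfold rem, upd.
      destruct (Nat.eqb z x0); auto.
    + f_equal; rewrite H; apply ssubst_pw; intros z; unfold rem, upd.
      destruct (Nat.eqb_spec z x0), (Nat.eqb_spec z x); subst; auto; congruence.
  - unfold upd. destruct (Nat.eqb_spec x x0); simpl.
    + subst. rewrite Nat.eqb_refl. apply ssubst_closed; auto.
    + destruct (Nat.eqb_spec x0 x); [congruence|]. auto.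
Qed.

Lemma subst_notfree x r : forall t, ~ occurs_free x t -> subst x r t = t.
Proof.
  refine (term_ind' _ _ _ _ _ _ _ _ _ _); simpl; intros.
  - auto.
  - rewrite H; auto; intro; apply H0; constructor; auto.
  - rewrite H; auto; intro; apply H0; constructor; auto.
  - rewrite H, H0; auto; intro; apply H1; [apply of_outm_s|apply of_outm_m]; auto.
  - rewrite H, H0; auto; intro; apply H1; [apply of_inm_s|apply of_inm_m]; auto.
  - f_equal. rewrite <- (map_id br) at 2. apply map_ext_in; intros [l0 s0] Hin0; simpl; f_equal.
    apply (H l0); auto. intro; apply H0; econstructor; eauto.
  - f_equal. rewrite <- (map_id br) at 2. apply map_ext_in; intros [l0 s0] Hin0; simpl; f_equal.
    apply (H l0); auto. intro; apply H0; econstructor; eauto.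
  - destruct (Nat.eqb_spec x x0); auto. rewrite H; auto. intro; apply H0; constructor; auto.
  - destruct (Nat.eqb_spec x x0); auto. subst; exfalso; apply H; constructor.
Qed.

Lemma dualc_subst x v : closed v -> forall t rho, vclosed rho ->
  (forall z, occurs_free z t -> z = x \/ rho z <> None) ->
  dualc rho (subst x v t) = subst x (dualc none v) (dualc (upd rho x v) t).
Proof.
  intros C. refine (term_ind' _ _ _ _ _ _ _ _ _ _); simpl; intros.
  - auto.
  - f_equal; apply H; auto; intros; apply H1; constructor; auto.
  - f_equal; apply H; auto; intros; apply H1; constructor; auto.
  - f_equal; [|apply H0; auto; intros; apply H2; apply of_outm_s; auto].
    rewrite subst_ssubst, subst_notfree; auto.
    intro Hf. apply of_ssubst in Hf as [_ Hf]; [|apply vclosed_upd; auto].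
    unfold upd in Hf; rewrite Nat.eqb_refl in Hf; discriminate.
  - f_equal; [|apply H0; auto; intros; apply H2; apply of_inm_s; auto].
    rewrite subst_ssubst, subst_notfree; auto.
    intro Hf. apply of_ssubst in Hf as [_ Hf]; [|apply vclosed_upd; auto].
    unfold upd in Hf; rewrite Nat.eqb_refl in Hf; discriminate.
  - f_equal; rewrite !map_map; apply map_ext_in; intros [l0 s0] Hin0; simpl; f_equal.
    apply (H l0); auto. intros; apply H1; econstructor; eauto.
  - f_equal; rewrite !map_map; apply map_ext_in; intros [l0 s0] Hin0; simpl; f_equal.
    apply (H l0); auto. intros; apply H1; econstructor; eauto.
  - destruct (Nat.eqb_spec x x0).
    + subst. simpl. f_equal. apply dualc_pw. intros z.
      unfold upd. destruct (Nat.eqb_spec z x0); auto. f_equal. f_equal.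
      apply ssubst_pw; intros z'. unfold rem. destruct (Nat.eqb z' x0); auto.
    + simpl. destruct (Nat.eqb_spec x x0); [congruence|]. f_equal.
      set (Wy := Mu x0 (ssubst (rem rho x0) (subst x v t))).
      assert (Hcw : closed Wy).
      { intros z Hz. pose proof (@of_ssubst z (Mu x0 (subst x v t)) rho H0 Hz) as [h1 h2].
        inversion h1 as [| | | | | | | | |y0 s0 Hne Hof]; subst. apply of_subst in Hof as [h3 h4]; auto.
        destruct (H1 z) as [|]; auto; constructor; auto. }
      rewrite H; [| apply vclosed_upd; auto |].
      * f_equal. apply dualc_pw; intros z. unfold upd.
        destruct (Nat.eqb_spec z x), (Nat.eqb_spec z x0); subst; try congruence.
        f_equal. unfold Wy. 
        change (Mu x0 (ssubst (rem rho x0) (subst x v t))) with (ssubst rho (Mu x0 (subst x v t))).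
        transitivity (ssubst (upd rho x v) (Mu x0 t)); [|reflexivity].
        rewrite <- subst_ssubst; auto. simpl. destruct (Nat.eqb_spec x x0); [congruence|]. auto.
      * intros z Hz. unfold upd. destruct (Nat.eqb_spec z x0); [right; discriminate|].
        apply H1; constructor; auto.
  - destruct (Nat.eqb_spec x x0).
    + subst. simpl. apply dualc_ext. intros z Hz; exfalso; apply (C z Hz).
    + simpl. destruct (Nat.eqb_spec x x0); [congruence|]. auto.
Qed.


Definition good rho := forall y w, rho y = Some w -> SC w.
Definition cover rho (t : term) := forall z, occurs_free z t -> rho z <> None.

Lemma good_vclosed rho : good rho -> vclosed rho.
Proof. intros H y w E; apply (H y w E). Qed.

Lemma good_rem rho x : good rho -> good (rem rho x).
Proof. unfold good, rem; intros H y w; destruct (Nat.eqb y x); eauto; discriminate. Qed.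

Lemma good_upd rho x w : good rho -> SC w -> good (upd rho x w).
Proof. unfold good, upd; intros H C y w'; destruct (Nat.eqb y x); eauto; intros E; inversion E; subst; auto. Qed.

Lemma good_none : good none.
Proof. unfold good, none; discriminate. Qed.

Lemma ug_ssubst z : forall m rho, vclosed rho -> unguarded z (ssubst rho m) -> unguarded z m.
Proof.
  induction m; simpl; intros rho V H; try (inversion H; fail).
  - inversion H; subst. constructor; auto. eapply IHm; [apply vclosed_rem; eauto|eauto].
  - destruct (rho n) eqn:E.
    + exfalso. apply (V n t E z). apply ug_of; auto.
    + auto.
Qed.

Lemma guarded_ssubst : forall m rho, good rho -> guarded m -> guarded (ssubst rho m).
Proof.
  refine (term_ind' _ _ _ _ _ _ _ _ _ _); simpl; intros;
  try (match goal with H : guarded _ |- _ => inversion H; subst end); try (constructor; eauto; fail).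
  - constructor; intros l s Hin; apply in_mapb in Hin as [s0 [Hin ->]]; eauto.
  - constructor; intros l s Hin; apply in_mapb in Hin as [s0 [Hin ->]]; eauto.
  - constructor; [|apply H; auto; apply good_rem; auto].
    intro U; apply ug_ssubst in U; auto. apply vclosed_rem, good_vclosed; auto.
  - destruct (rho x) eqn:E; [|constructor]. apply (H x t E).
Qed.

Lemma wf_ssubst : forall m rho, good rho -> wf m -> wf (ssubst rho m).
Proof.
  refine (term_ind' _ _ _ _ _ _ _ _ _ _); simpl; intros;
  try (match goal with H : wf _ |- _ => inversion H; subst end); try (constructor; eauto; fail).
  - constructor; [destruct br; simpl; congruence|rewrite map_fst_mapb; auto|].
    intros l s Hin; apply in_mapb in Hin as [s0 [Hin ->]]; eauto.
  - constructor; [destruct br; simpl; congruence|rewrite map_fst_mapb; auto|].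
    intros l s Hin; apply in_mapb in Hin as [s0 [Hin ->]]; eauto.
  - constructor; apply H; auto; apply good_rem; auto.
  - destruct (rho x) eqn:E; [|constructor]. apply (H x t E).
Qed.

Lemma W_SC rho x s : good rho -> cover rho (Mu x s) -> guarded (Mu x s) -> wf (Mu x s) ->
  SC (ssubst rho (Mu x s)).
Proof.
  intros G Cv Gs Ws. split; [|split].
  - apply wf_ssubst; auto.
  - intros z Hz. apply of_ssubst in Hz as [h1 h2]; [|apply good_vclosed; auto].
    apply (Cv z h1 h2).
  - apply guarded_ssubst; auto.
Qed.

Lemma of_dualc z : forall t rho, good rho -> cover rho t -> guarded t -> wf t ->
  occurs_free z (dualc rho t) -> occurs_free z t.
Proof.
  refine (term_ind' _ _ _ _ _ _ _ _ _ _); simpl.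
  - intros rho G Cv Gu Wf Hz; inversion Hz.
  - intros b t IH rho G Cv Gu Wf Hz; inversion Hz; subst; inversion Gu; inversion Wf; subst.
    constructor; eapply IH; eauto. intros y Hy; apply Cv; constructor; auto.
  - intros b t IH rho G Cv Gu Wf Hz; inversion Hz; subst; inversion Gu; inversion Wf; subst.
    constructor; eapply IH; eauto. intros y Hy; apply Cv; constructor; auto.
  - intros m t IHm IH rho G Cv Gu Wf Hz; inversion Hz; subst; inversion Gu; inversion Wf; subst.
    + exfalso. match goal with H : occurs_free z (ssubst _ _) |- _ =>
        apply of_ssubst in H as [h1 h2]; [|apply good_vclosed; auto] end.
      apply (Cv z); auto. apply of_outm_m; auto.
    + apply of_outm_s; eapply IH; eauto. intros y Hy; apply Cv; apply of_outm_s; auto.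
  - intros m t IHm IH rho G Cv Gu Wf Hz; inversion Hz; subst; inversion Gu; inversion Wf; subst.
    + exfalso. match goal with H : occurs_free z (ssubst _ _) |- _ =>
        apply of_ssubst in H as [h1 h2]; [|apply good_vclosed; auto] end.
      apply (Cv z); auto. apply of_inm_m; auto.
    + apply of_inm_s; eapply IH; eauto. intros y Hy; apply Cv; apply of_inm_s; auto.
  - intros br IH rho G Cv Gu Wf Hz; inversion Hz; subst; inversion Gu; inversion Wf; subst.
    match goal with H : In _ (map _ _) |- _ => apply in_mapb in H as [s0 [Hin ->]] end.
    econstructor; eauto. eapply IH; eauto. intros y Hy; apply Cv; eapply of_sum; eauto.
  - intros br IH rho G Cv Gu Wf Hz; inversion Hz; subst; inversion Gu; inversion Wf; subst.
    match goal with H : In _ (map _ _) |- _ => apply in_mapb in H as [s0 [Hin ->]] end.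
    econstructor; eauto. eapply IH; eauto. intros y Hy; apply Cv; eapply of_choice; eauto.
  - intros x t IH rho G Cv Gu Wf Hz; inversion Hz; subst; inversion Gu; inversion Wf; subst.
    constructor; auto. eapply IH with (rho := upd rho x (ssubst rho (Mu x t))); eauto.
    + apply good_upd; auto. apply W_SC; auto.
    + intros y Hy; unfold upd; simpl. destruct (Nat.eqb_spec y x); [discriminate|].
      apply Cv; constructor; auto.
  - intros x rho G Cv Gu Wf Hz; auto.
Qed.

Lemma ug_dualc z : forall t rho, unguarded z (dualc rho t) -> unguarded z t.
Proof. induction t; simpl; intros rho H; inversion H; subst; constructor; eauto. Qed.

Lemma gw_dualc : forall t rho, good rho -> cover rho t -> guarded t -> wf t ->
  guarded (dualc rho t) /\ wf (dualc rho t).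
Proof.
  refine (term_ind' _ _ _ _ _ _ _ _ _ _); simpl; intros.
  - split; constructor.
  - inversion H2; inversion H3; subst. destruct (H rho); auto.
    + intros y Hy; apply H1; constructor; auto.
    + split; constructor; auto.
  - inversion H2; inversion H3; subst. destruct (H rho); auto.
    + intros y Hy; apply H1; constructor; auto.
    + split; constructor; auto.
  - inversion H3; inversion H4; subst. destruct (H0 rho); auto.
    + intros y Hy; apply H2; apply of_outm_s; auto.
    + split; constructor; auto. apply guarded_ssubst; auto. apply wf_ssubst; auto.
  - inversion H3; inversion H4; subst. destruct (H0 rho); auto.
    + intros y Hy; apply H2; apply of_inm_s; auto.
    + split; constructor; auto. apply guarded_ssubst; auto. apply wf_ssubst; auto.
  - inversion H2; inversion H3; subst. split; constructor;
    try (destruct br; simpl; congruence); try (rewrite map_fst_mapb; auto);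
    intros l s Hin; apply in_mapb in Hin as [s0 [Hin ->]];
    (eapply H; eauto; [intros y Hy; apply H1; econstructor; eauto]).
  - inversion H2; inversion H3; subst. split; constructor;
    try (destruct br; simpl; congruence); try (rewrite map_fst_mapb; auto);
    intros l s Hin; apply in_mapb in Hin as [s0 [Hin ->]];
    (eapply H; eauto; [intros y Hy; apply H1; econstructor; eauto]).
  - inversion H2; inversion H3; subst. destruct (H (upd rho x (ssubst rho (Mu x t)))); auto.
    + apply good_upd; auto. apply W_SC; auto.
    + intros y Hy; unfold upd. destruct (Nat.eqb_spec y x); [discriminate|].
      apply H1; constructor; auto.
    + split; constructor; auto. intro U; apply ug_dualc in U; auto.
  - split; constructor.
Qed.

Definition dual' := dual.

Lemma SC_dual t : SC t -> SC (dual t).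
Proof.
  intros (W & C & G).
  assert (Cv : cover none t) by (intros z Hz; exfalso; apply (C z Hz)).
  destruct (gw_dualc good_none Cv G W). split; [|split]; auto.
  intros z Hz. apply (C z). eapply of_dualc; eauto. apply good_none.
Qed.

Lemma dual_mu x s : dual (Mu x s) = Mu x (dualc (upd none x (Mu x s)) s).
Proof. unfold dual. cbn [dualc]. rewrite ssubst_none. reflexivity. Qed.

Lemma unfold_dual t u : unfold t u -> SC t -> unfold (dual t) (dual u).
Proof.
  induction 1; intros HS.
  - rewrite dual_mu. constructor.
    assert (E : dual (subst x (Mu x s) s) = subst x (dual (Mu x s)) (dualc (upd none x (Mu x s)) s)).
    { unfold dual at 1. rewrite dualc_subst; auto.
      - destruct HS as (_ & C & _); auto.
      - apply vclosed_none.
      - intros z Hz. left. destruct (Nat.eqb_spec z x); auto. exfalso.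
        destruct HS as (_ & C & _). apply (C z); constructor; auto. }
    rewrite <- dual_mu, <- E. apply IHunfold, SC_mu; auto.
  - constructor. destruct s; simpl in *; auto.
Qed.

End Dual.

Set Implicit Arguments.

Section DualComp.
Variables (BT L : Type) (leb : BT -> BT -> Prop) (B : term BT L -> term BT L -> Prop).
Hypothesis leb_refl : forall a, leb a a.
Hypothesis B_refl : forall s, SC s -> B s s.
Notation term := (term BT L).
Implicit Types (r s u : term) (br : list (L * term)).
Notation comp := (compliant leb B).
Notation st := (sys_tau leb B).

Lemma dual_outm m s : dual (OutM m s) = InM m (dual s).
Proof. unfold dual; simpl; rewrite ssubst_none; auto. Qed.
Lemma dual_inm m s : dual (InM m s) = OutM m (dual s).
Proof. unfold dual; simpl; rewrite ssubst_none; auto. Qed.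
Lemma dual_sum br : dual (Sum br) = Choice (map (fun p => (fst p, dual (snd p))) br).
Proof. reflexivity. Qed.
Lemma dual_choice br : dual (Choice br) = Sum (map (fun p => (fst p, dual (snd p))) br).
Proof. reflexivity. Qed.
Lemma dual_int b s : dual (InT b s) = OutT b (dual s).
Proof. reflexivity. Qed.
Lemma dual_outt b s : dual (OutT b s) = InT b (dual s).
Proof. reflexivity. Qed.
Lemma dual_is_mu u : is_mu (dual u) = is_mu u.
Proof. destruct u; reflexivity. Qed.

Definition D0 a b := exists u, SC u /\ unfold a (dual u) /\ unfold b u.
Definition E1 a b := exists br l s, SC (Sum br) /\ In (l, s) br /\
  a = Choice [(l, dual s)] /\ unfold b (Sum br).
Definition E2 a b := exists br l s, SC (Choice br) /\ In (l, s) br /\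
  unfold a (dual (Choice br)) /\ b = Choice [(l, s)].
Definition D a b := D0 a b \/ E1 a b \/ E2 a b.

Lemma D_start s : SC s -> D (dual s) s.
Proof.
  intros H. left. destruct (unfold_ex H) as [u Hu]. exists u; split; [|split]; auto.
  - eapply unfold_SC; eauto.
  - apply unfold_dual; auto.
Qed.

Lemma umu x s X : unfold (Mu x s) X -> unfold (subst x (Mu x s) s) X.
Proof. intros H; inversion H; subst; auto. discriminate. Qed.

Lemma SC_wf s : SC s -> wf s.
Proof. intros []; auto. Qed.

Ltac mu_tau_left := exfalso; match goal with Hn : ~ _ |- _ => apply Hn end;
  do 2 eexists; apply sys_left; constructor.
Ltac mu_tau_right := exfalso; match goal with Hn : ~ _ |- _ => apply Hn end;
  do 2 eexists; apply sys_right; constructor.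

Lemma nodup_SC_sum br l s s' : SC (Sum br) -> In (l, s) br -> In (l, s') br -> s = s'.
Proof. intros (W & _ & _) h1 h2; inversion W; subst; eapply nodup_fun; eauto. Qed.
Lemma nodup_SC_choice br l s s' : SC (Choice br) -> In (l, s) br -> In (l, s') br -> s = s'.
Proof. intros (W & _ & _) h1 h2; inversion W; subst; eapply nodup_fun; eauto. Qed.

Lemma SC_ne_sum br : SC (Sum br) -> br <> [].
Proof. intros (W & _); inversion W; auto. Qed.
Lemma SC_ne_choice br : SC (Choice br) -> br <> [].
Proof. intros (W & _); inversion W; auto. Qed.

Lemma D_postfix : compliance_postfix leb B D.
Proof.
  intros a b [(u & Su & Ha & Hb)|[(br & l & s & Sbr & Hin & -> & Hb)|(br & l & s & Sbr & Hin & Ha & ->)]].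
  -
    pose proof (unfold_nomu Hb) as Hu.
    split.
    + intros Hn.
      destruct (is_mu a) eqn:Ea; [destruct a; try discriminate; mu_tau_left|].
      destruct (is_mu b) eqn:Eb; [destruct b; try discriminate; mu_tau_right|].
      apply unfold_self in Ha; auto. apply unfold_self in Hb; auto. subst.
      destruct u; [split; eexists; constructor| exfalso ..].
      * apply Hn; do 2 eexists; eapply sys_sync; [rewrite dual_int; constructor|constructor|simpl; auto].
      * apply Hn; do 2 eexists; eapply sys_sync; [rewrite dual_outt; constructor|constructor|simpl; auto].
      * apply Hn; do 2 eexists; eapply sys_sync; [rewrite dual_outm; constructor|constructor|simpl; auto].
        apply B_refl. apply (SC_OutM Su).
      * apply Hn; do 2 eexists; eapply sys_sync; [rewrite dual_inm; constructor|constructor|simpl; auto].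
        apply B_refl. apply (SC_InM Su).
      * pose proof (SC_ne_sum Su) as Hne.
        destruct l as [|[l0 s0] [|q br]]; [congruence| |].
        -- apply Hn; do 2 eexists; eapply sys_sync; [rewrite dual_sum; simpl; constructor|constructor; left; eauto|simpl; auto].
        -- apply Hn; do 2 eexists; apply sys_left. rewrite dual_sum.
           apply st_choice with (l := l0) (s := dual s0); simpl; auto. lia.
      * pose proof (SC_ne_choice Su) as Hne.
        destruct l as [|[l0 s0] [|q br]]; [congruence| |].
        -- apply Hn; do 2 eexists; eapply sys_sync; [rewrite dual_choice; simpl; constructor; left; eauto|constructor|simpl; auto].
        -- apply Hn; do 2 eexists; apply sys_right.
           apply st_choice with (l := l0) (s := s0); simpl; auto. lia.
      * discriminate.
      * apply (SC_Var Su).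
    + intros a' b' Hs; inversion Hs as [r0 s0 r0' Hst|r0 s0 s0' Hst|r0 s0 r0' s0' a1 a2 Hst1 Hst2 Hcp]; subst; clear Hs.
      * destruct (is_mu a) eqn:Ea.
        { destruct a; try discriminate. apply step_mu in Hst as [_ ->].
          left; exists u; split; [|split]; auto. apply umu; auto. }
        apply unfold_self in Ha; auto; subst.
        destruct u; simpl in Hst; inversion Hst; subst; [|discriminate].
        right; left. apply in_mapb in H1 as [s1 [Hin1 ->]].
        exists l, l0, s1; split; [exact Su|]; repeat split; auto.
      * destruct (is_mu b) eqn:Eb.
        { destruct b; try discriminate. apply step_mu in Hst as [_ ->].
          left; exists u; split; [|split]; auto. apply umu; auto. }
        apply unfold_self in Hb; auto; subst.
        destruct u; inversion Hst; subst; [|discriminate].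
        right; right. exists l, l0, s; split; [exact Su|]; repeat split; auto.
      * destruct (is_mu a) eqn:Ea.
        { destruct a; try discriminate. apply step_mu in Hst1 as [-> _]. destruct a2; contradiction. }
        destruct (is_mu b) eqn:Eb.
        { destruct b; try discriminate. apply step_mu in Hst2 as [-> _]. exfalso; eapply compat_tau; eauto. }
        apply unfold_self in Ha; auto. apply unfold_self in Hb; auto. subst.
        destruct u.
        -- inversion Hst1; subst; contradiction.
        -- rewrite dual_int in Hst1; inv Hst1; inv Hst2. apply D_start. eapply SC_InT; eauto.
        -- rewrite dual_outt in Hst1; inv Hst1; inv Hst2. apply D_start. eapply SC_OutT; eauto.
        -- rewrite dual_outm in Hst1; inv Hst1; inv Hst2. apply D_start. eapply SC_OutM; eauto.
        -- rewrite dual_inm in Hst1; inv Hst1; inv Hst2. apply D_start. eapply SC_InM; eauto.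
        -- rewrite dual_sum in Hst1; inversion Hst1; subst; [|contradiction].
           destruct l as [|[l1 s1] [|q br]]; simpl in *; try discriminate.
           inv H0. inv Hst2. match goal with H : In _ [_] |- _ => destruct H as [E|[]] end; inv E. subst.
           apply D_start. eapply SC_Sum; eauto; left; eauto.
        -- inversion Hst2; subst; [|exfalso; eapply compat_tau; eauto].
           rewrite dual_choice in Hst1; simpl in Hst1; inv Hst1.
           destruct H0 as [E|[]]; inv E. simpl in Hcp; subst.
           apply D_start. eapply SC_Choice; eauto; left; eauto.
        -- discriminate.
        -- exfalso; apply (SC_Var Su).
  -
    split.
    + intros Hn.
      destruct (is_mu b) eqn:Eb; [destruct b; try discriminate; mu_tau_right|].
      apply unfold_self in Hb; auto. subst. exfalso.
      apply Hn; do 2 eexists; eapply sys_sync; [constructor|constructor; eauto|reflexivity].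
    + intros a' b' Hs; inversion Hs as [r0 s0 r0' Hst|r0 s0 s0' Hst|r0 s0 r0' s0' a1 a2 Hst1 Hst2 Hcp]; subst; clear Hs.
      * inversion Hst; subst; simpl in *; lia.
      * destruct (is_mu b) eqn:Eb.
        { destruct b; try discriminate. apply step_mu in Hst as [_ ->].
          right; left; exists br, l, s; split; [exact Sbr|]; repeat split; auto. apply umu; auto. }
        apply unfold_self in Hb; auto; subst. inversion Hst.
      * inversion Hst1; subst; [|simpl in *; lia].
        destruct (is_mu b) eqn:Eb.
        { destruct b; try discriminate. apply step_mu in Hst2 as [-> _]. exfalso; eapply compat_tau; eauto. }
        apply unfold_self in Hb; auto; subst. inv Hst2. simpl in Hcp; subst.
        rewrite (@nodup_SC_sum br l0 b' s Sbr H0 Hin). apply D_start. eapply SC_Sum; eauto.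
  -
    split.
    + intros Hn.
      destruct (is_mu a) eqn:Ea; [destruct a; try discriminate; mu_tau_left|].
      apply unfold_self in Ha; auto. subst. exfalso.
      apply Hn; do 2 eexists; eapply sys_sync;
        [rewrite dual_choice; constructor; apply in_mapb'; eauto|constructor|reflexivity].
    + intros a' b' Hs; inversion Hs as [r0 s0 r0' Hst|r0 s0 s0' Hst|r0 s0 r0' s0' a1 a2 Hst1 Hst2 Hcp]; subst; clear Hs.
      * destruct (is_mu a) eqn:Ea.
        { destruct a; try discriminate. apply step_mu in Hst as [_ ->].
          right; right; exists br, l, s; split; [exact Sbr|]; repeat split; auto. apply umu; auto. }
        apply unfold_self in Ha; auto; subst. inversion Hst.
      * inversion Hst; subst; simpl in *; lia.
      * inversion Hst2; subst; [|simpl in *; lia].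
        destruct (is_mu a) eqn:Ea.
        { destruct a; try discriminate. apply step_mu in Hst1 as [-> _]. contradiction. }
        apply unfold_self in Ha; auto; subst. rewrite dual_choice in Hst1. inv Hst1.
        apply in_mapb in H0 as [s1 [Hin1 ->]]. simpl in Hcp; subst.
        rewrite (@nodup_SC_choice br l s1 b' Sbr Hin1 Hin). apply D_start. eapply SC_Choice; eauto.
Qed.

Lemma dual_compliant s : SC s -> comp (dual s) s.
Proof. intros H; exists D; split; [apply D_postfix|apply D_start; auto]. Qed.

End DualComp.

Set Implicit Arguments.

Section Compl.
Variables (BT L : Type) (leb : BT -> BT -> Prop) (B : term BT L -> term BT L -> Prop).
Hypothesis leb_refl : forall a, leb a a.
Hypothesis B_refl : forall s, SC s -> B s s.
Notation term := (term BT L).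
Implicit Types (r s u : term) (br : list (L * term)).
Notation comp := (compliant leb B).
Notation st := (sys_tau leb B).

Lemma SC_One : SC (One BT L).
Proof. split; [constructor|split; [intros z H; inversion H|constructor]]. Qed.
Lemma SC_mk_OutT b s : SC s -> SC (OutT b s).
Proof. intros (W&C&G); split; [constructor; auto|split; [intros z H; inversion H; subst; eapply C; eauto|constructor; auto]]. Qed.
Lemma SC_mk_InT b s : SC s -> SC (InT b s).
Proof. intros (W&C&G); split; [constructor; auto|split; [intros z H; inversion H; subst; eapply C; eauto|constructor; auto]]. Qed.
Lemma SC_mk_OutM m s : SC m -> SC s -> SC (OutM m s).
Proof. intros (W'&C'&G') (W&C&G); split; [constructor; auto|split; [intros z H; inversion H; subst; [eapply C'|eapply C]; eauto|constructor; auto]]. Qed.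
Lemma SC_mk_InM m s : SC m -> SC s -> SC (InM m s).
Proof. intros (W'&C'&G') (W&C&G); split; [constructor; auto|split; [intros z H; inversion H; subst; [eapply C'|eapply C]; eauto|constructor; auto]]. Qed.
Lemma SC_mk_Ch1 l s : SC s -> SC (Choice [(l, s)]).
Proof.
  intros (W&C&G); split; [|split].
  - constructor; [discriminate|constructor; [simpl; auto|constructor]|]. intros l' s' [E|[]]; inversion E; subst; auto.
  - intros z H; inversion H; subst. destruct H1 as [E|[]]; inversion E; subst. eapply C; eauto.
  - constructor. intros l' s' [E|[]]; inversion E; subst; auto.
Qed.

Lemma tau_cases u u' : step u (Tau _ _) u' -> is_mu u = false ->
  exists br, u = Choice br /\ 1 < length br /\ exists l s, In (l, s) br /\ u' = Choice [(l, s)].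
Proof. intros H; inversion H; subst; simpl; try discriminate. intros; exists br; eauto 7. Qed.

Lemma analyze rho u : comp rho u -> is_mu u = false ->
  (forall r', ~ step rho (Tau _ _) r') -> (forall r', ~ step rho (Tick _ _) r') ->
  (forall a r' l, step rho a r' -> a <> AInL _ l) ->
  exists a r' b u', step rho a r' /\ step u b u' /\ compat leb B a b.
Proof.
  intros Hc Hm h1 h2 h3.
  destruct (classic (exists br, u = Choice br /\ 1 < length br)) as [(br & -> & Hl)|Hnc].
  - exfalso. destruct br as [|[l0 s0] br]; simpl in Hl; [lia|].
    pose proof (comp_single l0 s0 Hc (or_introl eq_refl)) as Hc1.
    destruct (force_sync Hc1) as (a & r' & b & u' & k1 & k2 & k3); auto.
    + intros s' Hs; inversion Hs; subst; simpl in *; lia.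
    + inversion k2; subst; [|simpl in *; lia]. destruct a; simpl in k3; try contradiction.
      eapply h3; eauto.
  - apply force_sync; auto. intros s' Hs. destruct (tau_cases Hs Hm) as (br & -> & Hl & _).
    apply Hnc; eauto.
Qed.

Lemma sub_u a b u1 u2 : subcontract leb B a b -> unfold a u1 -> unfold b u2 ->
  forall r, SC r -> comp r u1 -> comp r u2.
Proof.
  intros Hs h1 h2 r Sr Hc. eapply comp_unfold; eauto. apply Hs; auto.
  eapply comp_unfold_back; eauto.
Qed.

Ltac nostep := let x := fresh in intros ? x; inversion x; subst; simpl in *; try lia.

Lemma comp_One : comp (One _ _) (One _ _).
Proof.
  apply comp_intro.
  - intros _; split; eexists; constructor.
  - intros r' s' Hs; inversion Hs; subst;
    repeat match goal with H : step (One _ _) _ _ |- _ => inversion H; subst; clear H end;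
    try (match goal with H : compat _ _ _ _ |- _ => simpl in H; contradiction end).
Qed.

Lemma comp_One_inv u : comp (One _ _) u -> is_mu u = false -> u = One _ _.
Proof.
  intros Hc Hm. apply NNPP; intro Hne.
  destruct (classic (exists br, u = Choice br /\ 1 < length br)) as [(br & -> & Hl)|Hnc].
  - destruct br as [|[l0 s0] br]; simpl in Hl; [lia|].
    pose proof (comp_single l0 s0 Hc (or_introl eq_refl)) as Hc1.
    destruct (comp_stuck Hc1) as [_ [s' Hs]].
    + intros (r' & s' & Hs); inversion Hs; subst.
      * inversion H.
      * inversion H; subst; simpl in *; lia.
      * inversion H; subst. simpl in H1; contradiction.
    + inversion Hs.
  - destruct (comp_stuck Hc) as [_ [s' Hs]].
    + intros (r' & s' & Hs); inversion Hs; subst.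
      * inversion H.
      * destruct (tau_cases H Hm) as (br & -> & Hl & _). apply Hnc; eauto.
      * inversion H; subst. simpl in H1; contradiction.
    + apply Hne; eapply step_tick; eauto.
Qed.


Ltac pre_tac := apply comp_intro;
  [ intros Hn; exfalso; apply Hn; do 2 eexists; eapply sys_sync; [constructor|constructor|simpl; auto]
  | intros r' s' Hs; inversion Hs; subst;
    repeat match goal with H : step (_ _ _) _ _ |- _ => inversion H; subst; clear H end; auto ].

Lemma comp_pre_int b r s : comp r s -> comp (OutT b r) (InT b s).
Proof. intros Hc; pre_tac. Qed.
Lemma comp_pre_outt b r s : comp r s -> comp (InT b r) (OutT b s).
Proof. intros Hc; pre_tac. Qed.
Lemma comp_pre_outm m r s : SC m -> comp r s -> comp (InM m r) (OutM m s).
Proof. intros Sm Hc; pre_tac. Qed.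
Lemma comp_pre_inm m r s : SC m -> comp r s -> comp (OutM m r) (InM m s).
Proof. intros Sm Hc; pre_tac. Qed.

Lemma comp_sum_client br l s r : In (l, s) br -> NoDup (map fst br) -> comp r s ->
  comp (Choice [(l, r)]) (Sum br).
Proof.
  intros Hin N Hc. apply comp_intro.
  - intros Hn; exfalso; apply Hn; do 2 eexists; eapply sys_sync; [constructor|constructor; eauto|reflexivity].
  - intros r' s' Hs; inversion Hs; subst.
    + inversion H; subst; simpl in *; lia.
    + inversion H.
    + inversion H; subst; [|simpl in *; lia]. inversion H0; subst. simpl in H1; subst.
      rewrite (nodup_fun N H3 Hin); auto.
Qed.

Definition Rc a b := SC a /\ SC b /\ subcontract leb B a b.

Ltac client_ok := first [ intros ? Hx; inversion Hx; subst; simpl in *; lia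
  | intros ? ? ? Hx; inversion Hx; subst; discriminate ].

Lemma completeness_S a b : Rc a b -> S_fun leb Rc B a b.
Proof.
  intros (Sa & Sb & Hs).
  destruct (unfold_ex Sa) as [u1 Hu1]. destruct (unfold_ex Sb) as [u2 Hu2].
  pose proof (unfold_SC Hu1 Sa) as Su1. pose proof (unfold_SC Hu2 Sb) as Su2.
  pose proof (unfold_nomu Hu1) as Hm1. pose proof (unfold_nomu Hu2) as Hm2.
  pose proof (sub_u Hs Hu1 Hu2) as Hsub.
  exists u1; split; auto. destruct u1.
  - pose proof (Hsub _ SC_One comp_One) as Hc.
    rewrite (comp_One_inv Hc Hm2) in Hu2; auto.
  -
    pose proof (SC_InT Su1) as Ss.
    assert (Hc : comp (OutT b0 (dual u1)) u2).
    { apply Hsub. apply SC_mk_OutT, SC_dual; auto. apply comp_pre_int, dual_compliant; auto. }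
    destruct (analyze Hc Hm2) as (a' & r' & b' & u' & k1 & k2 & k3); try client_ok.
    inversion k1; subst. destruct b'; simpl in k3; try contradiction. inversion k2; subst.
    exists b1, u'; split; auto. split; auto. split; [|split]; auto.
    + eapply SC_InT; eauto.
    + intros r Sr Hr. pose proof (Hsub _ (SC_mk_OutT b0 Sr) (comp_pre_int b0 Hr)) as Hc'.
      eapply comp_step; [exact Hc'|]. eapply sys_sync; [constructor|constructor|exact k3].
  -
    pose proof (SC_OutT Su1) as Ss.
    assert (Hc : comp (InT b0 (dual u1)) u2).
    { apply Hsub. apply SC_mk_InT, SC_dual; auto. apply comp_pre_outt, dual_compliant; auto. }
    destruct (analyze Hc Hm2) as (a' & r' & b' & u' & k1 & k2 & k3); try client_ok.
    inversion k1; subst. destruct b'; simpl in k3; try contradiction. inversion k2; subst.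
    exists b1, u'; split; auto. split; auto. split; [|split]; auto.
    + eapply SC_OutT; eauto.
    + intros r Sr Hr. pose proof (Hsub _ (SC_mk_InT b0 Sr) (comp_pre_outt b0 Hr)) as Hc'.
      eapply comp_step; [exact Hc'|]. eapply sys_sync; [constructor|constructor|exact k3].
  -
    destruct (SC_OutM Su1) as [Sm Ss].
    assert (Hc : comp (InM u1_1 (dual u1_2)) u2).
    { apply Hsub. apply SC_mk_InM, SC_dual; auto. apply comp_pre_outm, dual_compliant; auto. }
    destruct (analyze Hc Hm2) as (a' & r' & b' & u' & k1 & k2 & k3); try client_ok.
    inversion k1; subst. destruct b'; simpl in k3; try contradiction. inversion k2; subst.
    exists t, u'; split; auto. split; auto. split; [|split]; auto.
    + eapply SC_OutM; eauto.
    + intros r Sr Hr. pose proof (Hsub _ (SC_mk_InM Sm Sr) (comp_pre_outm Sm Hr)) as Hc'.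
      eapply comp_step; [exact Hc'|]. eapply sys_sync; [constructor|constructor|exact k3].
  -
    destruct (SC_InM Su1) as [Sm Ss].
    assert (Hc : comp (OutM u1_1 (dual u1_2)) u2).
    { apply Hsub. apply SC_mk_OutM, SC_dual; auto. apply comp_pre_inm, dual_compliant; auto. }
    destruct (analyze Hc Hm2) as (a' & r' & b' & u' & k1 & k2 & k3); try client_ok.
    inversion k1; subst. destruct b'; simpl in k3; try contradiction. inversion k2; subst.
    exists t, u'; split; auto. split; auto. split; [|split]; auto.
    + eapply SC_InM; eauto.
    + intros r Sr Hr. pose proof (Hsub _ (SC_mk_OutM Sm Sr) (comp_pre_inm Sm Hr)) as Hc'.
      eapply comp_step; [exact Hc'|]. eapply sys_sync; [constructor|constructor|exact k3].
  -
    assert (N : NoDup (map fst l)) by (destruct Su1 as (W1&_&_); inversion W1; auto).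
    assert (Hh : exists l0 s0, In (l0, s0) l).
    { destruct l as [|[l0 s0] ?]; [exfalso; apply (SC_ne_sum Su1); auto|exists l0, s0; left; auto]. }
    destruct Hh as (l0 & s0 & Hin0).
    assert (Ss0 : SC s0) by (eapply SC_Sum; [exact Su1|exact Hin0]).
    assert (Hc : comp (Choice [(l0, dual s0)]) u2).
    { apply Hsub. apply SC_mk_Ch1, SC_dual; auto.
      apply comp_sum_client with (s := s0); auto. apply dual_compliant; auto. }
    destruct (analyze Hc Hm2) as (a' & r' & b' & u' & k1 & k2 & k3); try client_ok.
    inversion k1; subst; [|simpl in *; lia]. destruct b'; simpl in k3; try contradiction.
    inversion k2; subst. rename br into br2.
    exists br2; split; auto. intros lk s Hin.
    assert (Ss : SC s) by (eapply SC_Sum; [exact Su1|exact Hin]).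
    assert (Hc1 : comp (Choice [(lk, dual s)]) (Sum br2)).
    { apply Hsub. apply SC_mk_Ch1, SC_dual; auto.
      apply comp_sum_client with (s := s); auto. apply dual_compliant; auto. }
    destruct (analyze Hc1 Hm2) as (a1 & r1 & b1 & u1 & j1 & j2 & j3); try client_ok.
    inversion j1; subst; [|simpl in *; lia]. destruct b1; simpl in j3; try contradiction.
    inversion j2; subst.
    exists u1; split; auto. split; [|split].
    + auto.
    + eapply SC_Sum; [exact Su2|eauto].
    + intros r Sr Hr.
      pose proof (Hsub _ (SC_mk_Ch1 _ Sr) (comp_sum_client _ _ Hin N Hr)) as Hc'.
      eapply comp_step; [exact Hc'|]. eapply sys_sync; [constructor|constructor; eauto|reflexivity].
  -
    assert (N : NoDup (map fst l)) by (destruct Su1 as (W1&_&_); inversion W1; auto).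
    assert (Hne : l <> []) by (apply SC_ne_choice; auto).
    assert (Hc0 : comp (dual (Choice l)) u2).
    { apply Hsub. apply SC_dual; auto. apply dual_compliant; auto. }
    assert (Hsh : exists br2, u2 = Choice br2).
    { destruct (classic (exists br2, u2 = Choice br2)) as [H|Hn]; auto. exfalso.
      destruct (force_sync Hc0) as (a' & r' & b' & u' & k1 & k2 & k3).
      - rewrite dual_choice; intros ? Hx; inversion Hx.
      - intros s' Hx; destruct (tau_cases Hx Hm2) as (br & -> & _); apply Hn; eauto.
      - rewrite dual_choice; intros ? Hx; inversion Hx.
      - rewrite dual_choice in k1; inversion k1; subst. destruct b'; simpl in k3; try contradiction.
        inversion k2; subst. apply Hn; eauto. }
    destruct Hsh as (br2 & ->).
    exists br2; split; auto. intros lk s' Hin'.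
    pose proof (comp_single lk s' Hc0 Hin') as Hc1.
    destruct (force_sync Hc1) as (a' & r' & b' & u' & k1 & k2 & k3).
    { rewrite dual_choice; intros ? Hx; inversion Hx. }
    { intros ? Hx; inversion Hx; subst; simpl in *; lia. }
    { rewrite dual_choice; intros ? Hx; inversion Hx. }
    inversion k2; subst; [|simpl in *; lia]. destruct a'; simpl in k3; try contradiction. subst.
    rename u' into s'.
    rewrite dual_choice in k1; inversion k1; subst.
    match goal with H : In _ (map _ _) |- _ => apply in_mapb in H as [s [Hins ->]] end.
    exists s; split; auto.
    assert (Ss : SC s) by (eapply SC_Choice; [exact Su1|exact Hins]).
    assert (Ss' : SC s') by (eapply SC_Choice; [exact Su2|exact Hin']).
    split; [|split]; auto.
    intros r Sr Hr.
    set (f := fun p : L * term => (fst p, if excluded_middle_informative (fst p = lk) then r else dual (snd p))).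
    set (cr := Sum (map f l)).
    assert (inf : forall l0 x, In (l0, x) (map f l) -> exists s0, In (l0, s0) l /\
       x = if excluded_middle_informative (l0 = lk) then r else dual s0).
    { intros l0 x H. apply in_map_iff in H as [[l1 s1] [E H]]. unfold f in E; simpl in E.
      inversion E; subst. eauto. }
    assert (inf' : forall l0 s0, In (l0, s0) l ->
       In (l0, if excluded_middle_informative (l0 = lk) then r else dual s0) (map f l)).
    { intros l0 s0 H. apply in_map_iff. exists (l0, s0); split; auto. }
    assert (SCx : forall l0 x, In (l0, x) (map f l) -> SC x).
    { intros l0 x H. destruct (inf _ _ H) as (s0 & H0 & ->).
      destruct (excluded_middle_informative (l0 = lk)); auto. apply SC_dual. eapply SC_Choice; [exact Su1|exact H0]. }
    assert (Scr : SC cr).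
    { split; [|split].
      - constructor.
        + destruct l; simpl; congruence.
        + rewrite map_map; simpl; exact N.
        + intros l0 x H; destruct (SCx _ _ H); auto.
      - intros z Hz; inversion Hz; subst. destruct (SCx _ _ H0) as (_ & C & _). eapply C; eauto.
      - constructor. intros l0 x H; destruct (SCx _ _ H) as (_ & _ & G); auto. }
    assert (Hsingle : forall l0 s0, In (l0, s0) l -> comp cr (Choice [(l0, s0)])).
    { intros l0 s0 Hl0. apply comp_intro.
      - intros Hn; exfalso; apply Hn; do 2 eexists; eapply sys_sync;
          [apply st_sum, inf'; eauto|constructor|reflexivity].
      - intros r2 s2 Hst; inversion Hst as [? ? ? Hx|? ? ? Hx|? ? ? ? a1 a2 Hx1 Hx2 Hcp]; subst.
        + inversion Hx.
        + inversion Hx; subst; simpl in *; lia.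
        + inversion Hx2; subst; [|simpl in *; lia]. inversion Hx1; subst.
          simpl in Hcp. subst.
          match goal with H : In (_, r2) (map f l) |- _ => destruct (inf _ _ H) as (s1 & Hs1 & ->) end.
          rewrite (nodup_fun N Hs1 Hl0) in *.
          destruct (excluded_middle_informative (l0 = lk)).
          * subst. rewrite (nodup_fun N Hl0 Hins). exact Hr.
          * apply dual_compliant; auto. eapply SC_Choice; [exact Su1|exact Hl0]. }
    assert (Hcr : comp cr (Choice l)).
    { destruct (Nat.lt_ge_cases 1 (length l)) as [Hl|Hl].
      - apply comp_intro.
        + intros Hn; exfalso. destruct l as [|[l0 s0] l'] ; [congruence|].
          apply Hn; do 2 eexists; apply sys_right. apply st_choice with (l := l0) (s := s0); auto. left; auto.
        + intros r2 s2 Hst; inversion Hst; subst.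
          * inversion H.
          * destruct (tau_cases H (eq_refl _)) as (br & E & _ & l0 & s0 & H0 & ->). inversion E; subst.
            apply Hsingle; auto.
          * inversion H0; subst; [simpl in *; lia|]. exfalso; eapply compat_tau; eauto.
      - destruct l as [|[l0 s0] [|q l']]; simpl in Hl; try congruence; try lia.
        apply Hsingle; left; auto. }
    pose proof (Hsub _ Scr Hcr) as Hc2.
    pose proof (comp_single lk s' Hc2 Hin') as Hc3.
    assert (Hinr : In (lk, r) (map f l)).
    { pose proof (inf' _ _ Hins) as H. destruct (excluded_middle_informative (lk = lk)); [exact H|congruence]. }
    eapply comp_step; [exact Hc3|]. eapply sys_sync; [apply st_sum; exact Hinr|constructor|reflexivity].
  - discriminate.
  - exfalso; apply (SC_Var Su1).
Qed.

End Compl.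


Theorem mainTheorem6 (BT L : Type) (leb : BT -> BT -> Prop)
  (Hleb : PreOrder leb)
  (B : term BT L -> term BT L -> Prop) (HB : preorder_on_SC B)
  (s1 s2 : term BT L) (H1 : SC s1) (H2 : SC s2) :
  syn_sub leb B s1 s2 <-> subcontract leb B s1 s2.
Proof.
  destruct HB as (HBsc & HBr & HBt).
  split.
  - intros Hs. eapply soundness; eauto.
    + intros a b c h1 h2. eapply PreOrder_Transitive; eauto.
    + destruct H2; auto.
  - intros Hs. exists (Rc leb B). split.
    + intros a b H. apply completeness_S; auto. intros x. apply PreOrder_Reflexive.
    + split; [|split]; auto.
Qed.
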